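(* Let $k\ge 0$, let $\Omega$ be any collection of functions, and let $\varphi$ be an expression of $\mathsf{TL}(\Omega)$ of treewidth at most $k$ whose free variables are among $x_1,\dots,x_{k+1}$. Then there is an expression $\varphi'\in\mathsf{TL}_{k+1}(\Omega)$ with $\mathrm{free}(\varphi')\subseteq\mathrm{free}(\varphi)$... more precisely with $[\![\varphi']\!]^\nu_G=[\![\varphi]\!]^\nu_G$ for every graph $G$ and every valuation $\nu$.
   Context: Fix integers $n\ge 1$ and $\ell\ge 1$. A graph is a triple $G=(V_G,E_G,\mathrm{col}_G)$ with $V_G=[n]$, $E_G$ a set of unordered pairs of distinct vertices, and $\mathrm{col}_G:V_G\to\mathbb R^\ell$. Tensor language $\mathsf{TL}(\Omega)$: $\Omega$ is a collection of functions $f:\mathbb R^p\to\mathbb R$ ($p\ge1$ depending on $f$). Expressions: $\varphi::=\mathbf 1_{x=y}\mid \mathbf 1_{x\neq y}\mid E(x,y)\mid P_s(x)\mid \varphi\cdot\varphi\mid \varphi+\varphi\mid a\cdot\varphi\mid f(\varphi_1,\dots,\varphi_p)\mid \sum_x\varphi$ ($s\in[\ell]$, $a\in\mathbb R$, $f\in\Omega$), with the usual free variables ($\sum_x$ binds $x$). Semantics for a graph $G$ and valuation $\nu$ into $V_G$: $[\![E(x,y)]\!]^\nu_G=1$ if $\nu(x)\nu(y)\in E_G$ else $0$; $[\![P_s(x)]\!]^\nu_G=\mathrm{col}_G(\nu(x))_s$; $[\![\mathbf 1_{x\,\mathrm{op}\,y}]\!]^\nu_G=1$ if $\nu(x)\,\mathrm{op}\,\nu(y)$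 else $0$; $\cdot,+,a\cdot,f$ act on values; $[\![\sum_x\varphi]\!]^\nu_G=\sum_{v\in V_G}[\![\varphi]\!]^{\nu[x\mapsto v]}_G$. $\mathsf{TL}_{k+1}(\Omega)$ is the set of expressions in which only variables from $\{x_1,\dots,x_{k+1}\}$ occur (free or bound; re-binding allowed). Conjunctive expressions and their treewidth. Allow, besides the atoms above, additional relation symbols $R$ of some arity $r$ (atoms $R(z_1,\dots,z_r)$, interpreted by arbitrary real-valued functions on $V_G^r$). A conjunctive expression is $\psi(\mathbf x)=\sum_{y_1}\cdots\sum_{y_p}\theta$, where $y_1,\dots,y_p$ are distinct variables not among the free variables $\mathbf x=(x_{i_1},\dots,x_{i_f})$, and $\theta$ is a product of atoms of the forms $E(z,z')$, $P_s(z)$, $\mathbf 1_{z=z'}$, $\mathbf 1_{z\ne z'}$, $R(z_1,\dots,z_r)$ with variables from $\mathbf x\cup\{y_1,\dots,y_p\}$. Its hypergraph $\mathcal H_\psi$ has vertex set $\mathbf x\cup\{y_1,\dots,y_p\}$, a multiset of hyperedges containing, for each atom, the set of variables occurring in it, and distinguished vertices $\mathbf x$. An elimination sequence is an ordering $v_1,\dots,v_N$ of the vertices with the $f$ distinguished ones first ($v_1,\dots,v_f$). Let $\mathcal E_N$ be the hyperedge multiset and, for $j=N,N-1,\dots,f+1$: $\partial(v_j)=\{F\in\mathcal E_j:v_j\in F\}$, $U_j=\bigcup_{F\in\partial(v_j)}F$, $\mathcal E_{j-1}=(\mathcal E_j\setminus\partial(v_j))\cup\{U_j\setminus\{v_j\}\}$.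 The induced width of the sequence is $f+\max_{f+1\le i\le N}|U_i\setminus\{v_1,\dots,v_f\}|-1$ (and $f-1$ if $N=f$). The treewidth of $\psi$ is the minimum induced width over its elimination sequences. Treewidth of arbitrary expressions (recursive on nesting of function applications): $\varphi\in\mathsf{TL}(\Omega)$ has treewidth at most $k$ if (a) the expression $\varphi_{\mathrm{nofun}}$, obtained from $\varphi$ by replacing each maximal subexpression of the form $f(\varphi_1,\dots,\varphi_p)$ by an atom $R_f(\mathbf z)$ with a fresh relation symbol, where $\mathbf z$ lists $\mathrm{free}(\varphi_1)\cup\dots\cup\mathrm{free}(\varphi_p)$, is equivalent (same value for all graphs, all interpretations of the fresh symbols and all valuations) to a finite linear combination $\sum_\alpha a_\alpha\psi_\alpha$, $a_\alpha\in\mathbb R$, of conjunctive expressions $\psi_\alpha$ each of treewidth at most $k$; and (b) every $\varphi_i$ occurring as an argument of such a maximal function application has treewidth at most $k$. *)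

(* Defs.v *)
From Stdlib Require Import Reals.
From mathcomp Require Import all_boot all_order all_algebra.
From mathcomp Require Import Rstruct.

Set Implicit Arguments.
Unset Strict Implicit.
Unset Printing Implicit Defensive.

Import Order.TTheory GRing.Theory Num.Theory.
Local Open Scope ring_scope.

(* Graphs on the vertex set [n] (represented by 'I_n) with colours in  *)
(* R^l (represented as 'I_l -> R).  Edges: a symmetric irreflexive     *)
(* adjacency relation (= a set of unordered pairs of distinct vertices).*)
Record graph (n l : nat) := Graph {
  adj : rel 'I_n;
  adj_sym : symmetric adj;
  adj_irr : irreflexive adj;
  col : 'I_n -> 'I_l -> R
}.

(* Variables are natural numbers: variable i stands for x_i.
   Valuations map every variable to a vertex. *)
Definition valuation (n : nat) := nat -> 'I_n.

Definition upd (n : nat) (nu : valuation n) (x : nat) (v : 'I_n) : valuation n :=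
  fun y => if y == x then v else nu y.

(* Expressions.  Omega is given by an index type F of function symbols *)
(* with arities ar : F -> nat and interpretations                      *)
(* fn f : R^(ar f) -> R.  Besides the constructors of TL(Omega) we      *)
(* include relation atoms RelA r zs (relation symbol r : nat applied to *)
(* the variable list zs), used for the "fresh relation symbols" in the  *)
(* definition of treewidth.  TL(Omega) = expressions without RelA.      *)
Inductive expr (l : nat) (F : Type) (ar : F -> nat) : Type :=
| EqA  of nat & nat
| NeqA of nat & nat
| EdgeA of nat & nat
| PA of 'I_l & nat
| Mul of expr l ar & expr l ar
| Add of expr l ar & expr l ar
| Scale of R & expr l ar
| App (f : F) of ('I_(ar f) -> expr l ar)
| Sum of nat & expr l ar
| RelA of nat & seq nat.

Arguments EqA {l F ar}.
Arguments NeqA {l F ar}.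
Arguments EdgeA {l F ar}.
Arguments PA {l F ar}.
Arguments Mul {l F ar}.
Arguments Add {l F ar}.
Arguments Scale {l F ar}.
Arguments App {l F ar}.
Arguments Sum {l F ar}.
Arguments RelA {l F ar}.

Section Expressions.
Variables (n l : nat) (F : Type) (ar : F -> nat)
          (fn : forall f : F, ('I_(ar f) -> R) -> R).

Local Notation expr := (expr l ar).

Definition rel_interp := nat -> seq 'I_n -> R.

Fixpoint eval (G : graph n l) (rho : rel_interp) (nu : valuation n) (e : expr)
  : R :=
  match e with
  | EqA x y => if nu x == nu y then 1 else 0
  | NeqA x y => if nu x != nu y then 1 else 0
  | EdgeA x y => if adj G (nu x) (nu y) then 1 else 0
  | PA s x => col G (nu x) s
  | Mul a b => eval G rho nu a * eval G rho nu b
  | Add a b => eval G rho nu a + eval G rho nu b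
  | Scale c a => c * eval G rho nu a
  | App f args => fn (fun i => eval G rho nu (args i))
  | Sum x a => \sum_(v : 'I_n) eval G rho (upd nu x v) a
  | RelA r zs => rho r [seq nu z | z <- zs]
  end.

Definition tl_eval (G : graph n l) (nu : valuation n) (e : expr) : R :=
  eval G (fun _ _ => 0) nu e.

Fixpoint fv (e : expr) : seq nat :=
  match e with
  | EqA x y | NeqA x y | EdgeA x y => [:: x; y]
  | PA _ x => [:: x]
  | Mul a b | Add a b => fv a ++ fv b
  | Scale _ a => fv a
  | App f args => flatten [seq fv (args i) | i <- enum 'I_(ar f)]
  | Sum x a => [seq y <- fv a | y != x]
  | RelA _ zs => zs
  end.

Fixpoint vars (e : expr) : seq nat :=
  match e with
  | EqA x y | NeqA x y | EdgeA x y => [:: x; y]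
  | PA _ x => [:: x]
  | Mul a b | Add a b => vars a ++ vars b
  | Scale _ a => vars a
  | App f args => flatten [seq vars (args i) | i <- enum 'I_(ar f)]
  | Sum x a => x :: vars a
  | RelA _ zs => zs
  end.

Fixpoint is_TL (e : expr) : Prop :=
  match e with
  | Mul a b | Add a b => is_TL a /\ is_TL b
  | Scale _ a | Sum _ a => is_TL a
  | App f args => forall i, is_TL (args i)
  | RelA _ _ => False
  | _ => True
  end.

Definition in_TLk (k : nat) (e : expr) : Prop :=
  is_TL e /\ all (fun x => (1 <= x <= k.+1)%N) (vars e).

Inductive atom :=
| AEq of nat & nat
| ANeq of nat & nat
| AEdge of nat & nat
| AP of 'I_l & nat
| ARel of nat & seq nat.

Definition atom_vars (a : atom) : seq nat :=
  match a with
  | AEq x y | ANeq x y | AEdge x y => undup [:: x; y]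
  | AP _ x => [:: x]
  | ARel _ zs => undup zs
  end.

Definition atom_eval (G : graph n l) (rho : rel_interp) (nu : valuation n)
  (a : atom) : R :=
  match a with
  | AEq x y => if nu x == nu y then 1 else 0
  | ANeq x y => if nu x != nu y then 1 else 0
  | AEdge x y => if adj G (nu x) (nu y) then 1 else 0
  | AP s x => col G (nu x) s
  | ARel r zs => rho r [seq nu z | z <- zs]
  end.

Record cq := CQ { cq_free : seq nat; cq_bound : seq nat; cq_atoms : seq atom }.

Definition cq_wf (q : cq) : bool :=
  [&& uniq (cq_free q), uniq (cq_bound q),
      all (fun y => y \notin cq_free q) (cq_bound q) &
      all (fun a => all (fun z => z \in cq_free q ++ cq_bound q) (atom_vars a))
          (cq_atoms q)].

Fixpoint cq_sem (G : graph n l) (rho : rel_interp) (ys : seq nat)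
  (atoms : seq atom) (nu : valuation n) : R :=
  match ys with
  | [::] => \prod_(a <- atoms) atom_eval G rho nu a
  | y :: ys' => \sum_(v : 'I_n) cq_sem G rho ys' atoms (upd nu y v)
  end.

Definition cq_eval (G : graph n l) (rho : rel_interp) (nu : valuation n) (q : cq)
  : R := cq_sem G rho (cq_bound q) (cq_atoms q) nu.

Definition cq_hyperedges (q : cq) : seq (seq nat) := map atom_vars (cq_atoms q).

Definition elim_seq (q : cq) (ord : seq nat) : bool :=
  uniq ord && perm_eq ord (cq_free q ++ cq_bound q)
  && perm_eq (take (size (cq_free q)) ord) (cq_free q).

(* running the elimination on vertices vs (in the given order, i.e.
   v_N, v_{N-1}, ..., v_{f+1}) starting from hyperedge multiset E;
   returns the list of the sets U_j *)
Fixpoint elim_U (E : seq (seq nat)) (vs : seq nat) : seq (seq nat) :=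
  match vs with
  | [::] => [::]
  | v :: vs' =>
      let dv := [seq Fe <- E | v \in Fe] in
      let U := undup (flatten dv) in
      U :: elim_U ([seq Fe <- E | v \notin Fe] ++ [:: [seq x <- U | x != v]]) vs'
  end.

(* induced width  f + max_{f+1 <= i <= N} |U_i \ {v_1..v_f}| - 1
   (the max over an empty range is 0, giving f - 1 when N = f) *)
Definition induced_width (q : cq) (ord : seq nat) : int :=
  let f := size (cq_free q) in
  let D := take f ord in
  let Us := elim_U (cq_hyperedges q) (rev (drop f ord)) in
  (Posz (f + foldr maxn 0%N [seq size [seq x <- U | x \notin D] | U <- Us])
     - 1)%R.

Definition cq_tw_le (k : nat) (q : cq) : Prop :=
  exists2 ord, elim_seq q ord & (induced_width q ord <= Posz k)%R.

(* phi_nofun: replace every maximal subexpression f(phi_1..phi_p) by a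
   relation atom with a fresh symbol (numbered c, c+1, ...) applied to
   the free variables of phi_1, ..., phi_p *)
Fixpoint nofun (c : nat) (e : expr) : expr * nat :=
  match e with
  | App f args => (RelA c (fv e), c.+1)
  | Mul a b => let: (a', c1) := nofun c a in
               let: (b', c2) := nofun c1 b in (Mul a' b', c2)
  | Add a b => let: (a', c1) := nofun c a in
               let: (b', c2) := nofun c1 b in (Add a' b', c2)
  | Scale x a => let: (a', c1) := nofun c a in (Scale x a', c1)
  | Sum x a => let: (a', c1) := nofun c a in (Sum x a', c1)
  | _ => (e, c)
  end.

Definition lincomb_tw_le (k : nat) (e : expr) : Prop :=
  exists cs : seq (R * cq),
    List.Forall (fun p : R * cq => cq_wf p.2 /\ cq_tw_le k p.2) cs /\
    forall (G : graph n l) (rho : rel_interp) (nu : valuation n),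
      eval G rho nu e = \sum_(p <- cs) p.1 * cq_eval G rho nu p.2.

(* treewidth at most k: condition (a) on phi_nofun and (b), recursively,
   for the arguments of maximal function applications *)
Fixpoint tw_le (k : nat) (e : expr) : Prop :=
  let fix args_ok (e' : expr) : Prop :=
    match e' with
    | App f args => forall i, tw_le k (args i)
    | Mul a b | Add a b => args_ok a /\ args_ok b
    | Scale _ a | Sum _ a => args_ok a
    | _ => True
    end in
  lincomb_tw_le k (nofun 0 e).1 /\ args_ok e.

End Expressions.

(* Main.v *)
Require Import Defs.
From Stdlib Require Import Reals.
From mathcomp Require Import all_boot all_order all_algebra.
From mathcomp Require Import Rstruct.
From Stdlib Require Import FunctionalExtensionality.
From mathcomp Require Import zify.

Set Implicit Arguments.
Unset Strict Implicit.
Unset Printing Implicit Defensive.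
Import Order.TTheory GRing.Theory Num.Theory.
Local Open Scope ring_scope.

Section Part1.
Variables (n l : nat) (F : Type) (ar : F -> nat)
          (fn : forall f : F, ('I_(ar f) -> R) -> R).
Local Notation expr := (expr l ar).

Lemma eval_fv (G : graph n l) rho (e : expr) (nu nu' : valuation n) :
  (forall z, z \in fv e -> nu z = nu' z) ->
  eval fn G rho nu e = eval fn G rho nu' e.
Proof.
elim: e nu nu' => /=.
- by move=> x y nu nu' H; rewrite !H ?inE ?eqxx ?orbT.
- by move=> x y nu nu' H; rewrite !H ?inE ?eqxx ?orbT.
- by move=> x y nu nu' H; rewrite !H ?inE ?eqxx ?orbT.
- by move=> s x nu nu' H; rewrite !H ?inE ?eqxx ?orbT.
- move=> a IHa b IHb nu nu' H.
  by rewrite (IHa nu nu') ?(IHb nu nu') // => z Hz; apply: H; rewrite mem_cat Hz ?orbT.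
- move=> a IHa b IHb nu nu' H.
  by rewrite (IHa nu nu') ?(IHb nu nu') // => z Hz; apply: H; rewrite mem_cat Hz ?orbT.
- by move=> c a IHa nu nu' H; rewrite (IHa nu nu').
- move=> f args IH nu nu' H; congr (fn _); apply: functional_extensionality => i.
  apply: IH => z Hz; apply: H; apply/flattenP; exists (fv (args i)) => //.
  by apply/mapP; exists i; rewrite ?mem_enum.
- move=> x a IHa nu nu' H; apply: eq_bigr => v _; apply: IHa => z Hz.
  rewrite /upd; case: eqP => // /eqP hzx; apply: H; by rewrite mem_filter hzx.
- move=> r zs nu nu' H; congr (rho r _); apply/eq_in_map => z Hz; exact: H.
Qed.

End Part1.
Section Part2.
Variables (n l : nat) (F : Type) (ar : F -> nat)
          (fn : forall f : F, ('I_(ar f) -> R) -> R) (k : nat).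
Local Notation expr := (expr l ar).
Local Notation inr x := (1 <= x <= k.+1)%N.

Lemma TL_one : in_TLk k (EqA 1 1 : expr).
Proof. by split. Qed.

Lemma TL_Mul (a b : expr) : in_TLk k a -> in_TLk k b -> in_TLk k (Mul a b).
Proof. by case=> ?? [??]; split => //=; rewrite all_cat; apply/andP. Qed.

Lemma TL_Add (a b : expr) : in_TLk k a -> in_TLk k b -> in_TLk k (Add a b).
Proof. by case=> ?? [??]; split => //=; rewrite all_cat; apply/andP. Qed.

Lemma TL_Scale c (a : expr) : in_TLk k a -> in_TLk k (Scale c a).
Proof. by case=> ??; split. Qed.

Lemma TL_Sum s (a : expr) : inr s -> in_TLk k a -> in_TLk k (Sum s a).
Proof. by move=> hs [??]; split => //=; rewrite hs. Qed.

Lemma TL_App f (args : 'I_(ar f) -> expr) :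
  (forall i, in_TLk k (args i)) -> in_TLk k (App f args).
Proof.
move=> H; split => /=; first by move=> i; case: (H i).
apply/allP => x /flattenP [s /mapP [i _ ->]]; case: (H i) => _ /allP; apply.
Qed.

Lemma inr_iota s : s \in iota 1 k.+1 -> inr s.
Proof. by rewrite mem_iota add1n. Qed.

Lemma fresh_slot (L : seq nat) : (size L < k.+1)%N ->
  exists s, inr s /\ s \notin L.
Proof.
move=> hL; case: (boolP (all (fun s => s \in L) (iota 1 k.+1))).
- move/allP => hsub.
  have := uniq_leq_size (iota_uniq 1 k.+1) hsub.
  by rewrite size_iota leqNgt hL.
- by case/allPn => s hs hn; exists s; split => //; apply: inr_iota.
Qed.

Fixpoint Nest (ys : seq nat) (H : valuation n -> R) (nu : valuation n) : R :=
  match ys with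
  | [::] => H nu
  | y :: ys' => \sum_(v : 'I_n) Nest ys' H (upd nu y v)
  end.

Lemma Nest_ext ys (H H' : valuation n -> R) nu :
  (forall nu, H nu = H' nu) -> Nest ys H nu = Nest ys H' nu.
Proof.
move=> E; elim: ys nu => //= y ys IH nu; apply: eq_bigr => v _; exact: IH.
Qed.

Lemma upd_comm (nu : valuation n) x y a b : x != y ->
  upd (upd nu x a) y b = upd (upd nu y b) x a.
Proof.
move=> hxy; apply: functional_extensionality => z; rewrite /upd.
case: (eqVneq z y) => [->|hzy]; first by rewrite eq_sym (negbTE hxy).
by case: (eqVneq z x).
Qed.

Lemma Nest_swap ys v (H : valuation n -> R) nu : v \notin ys ->
  \sum_(u : 'I_n) Nest ys H (upd nu v u) =
  Nest ys (fun nu => \sum_(u : 'I_n) H (upd nu v u)) nu.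
Proof.
elim: ys nu => //= y ys IH nu; rewrite inE negb_or => /andP [hvy hv].
rewrite exchange_big /=; apply: eq_bigr => w _.
rewrite -IH //; apply: eq_bigr => u _; by rewrite upd_comm.
Qed.

Lemma Nest_elim ys v (H : valuation n -> R) nu : uniq ys -> v \in ys ->
  Nest ys H nu = Nest (rem v ys) (fun nu => \sum_(u : 'I_n) H (upd nu v u)) nu.
Proof.
elim: ys nu => //= y ys IH nu /andP [hy hu]; rewrite inE.
case: (eqVneq y v) => [<-|hyv] /=.
  move=> _; rewrite ?eqxx /=; exact: Nest_swap.
move=> hv; apply: eq_bigr => w _; exact: IH.
Qed.


Definition factor := (seq nat * (graph n l -> valuation n -> R))%type.
Definition PF (Fs : seq factor) G nu : R := \prod_(p <- Fs) p.2 G nu.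
Definition dep (p : factor) := forall G (nu nu' : valuation n),
  (forall x, x \in p.1 -> nu x = nu' x) -> p.2 G nu = p.2 G nu'.

Definition dv (v : nat) (Fs : seq factor) := [seq p <- Fs | v \in p.1].
Definition Uv (v : nat) (Fs : seq factor) := undup (flatten (map fst (dv v Fs))).
Definition newf (v : nat) (Fs : seq factor) : factor :=
  ([seq x <- Uv v Fs | x != v],
   fun G nu => \sum_(u : 'I_n) PF (dv v Fs) G (upd nu v u)).
Definition step (v : nat) (Fs : seq factor) :=
  [seq p <- Fs | v \notin p.1] ++ [:: newf v Fs].

Lemma step_fst v Fs : map fst (step v Fs) =
  [seq Fe <- map fst Fs | v \notin Fe] ++
  [:: [seq x <- undup (flatten [seq Fe <- map fst Fs | v \in Fe]) | x != v]].
Proof. rewrite /step map_cat /= /Uv /dv !filter_map. done. Qed.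

Lemma PF_split (v : nat) (Fs : seq factor) G (nu : valuation n) u :
  List.Forall dep Fs ->
  PF Fs G (upd nu v u) =
  PF [seq p <- Fs | v \notin p.1] G nu * PF (dv v Fs) G (upd nu v u).
Proof.
rewrite /PF /dv; elim: Fs => [|p Fs IH] /=; first by rewrite !big_nil mulr1.
move=> hF; inversion hF; subst.
case: (boolP (v \in p.1)) => hv /=; rewrite !big_cons IH //.
  by rewrite mulrCA.
rewrite mulrA; congr (_ * _ * _); apply: H1 => x hx; rewrite /upd.
by case: eqP => // hxv; move: hv; rewrite -hxv hx.
Qed.

Lemma step_sem (v : nat) (Fs : seq factor) G (nu : valuation n) :
  List.Forall dep Fs ->
  \sum_(u : 'I_n) PF Fs G (upd nu v u) = PF (step v Fs) G nu.
Proof.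
move=> hdep; rewrite {2}/PF /step big_cat big_seq1 /= -/(PF _ G nu).
under eq_bigr => u _ do rewrite (PF_split _ _ _ _ hdep).
by rewrite -mulr_sumr.
Qed.


Lemma Forall_filter (P : factor -> Prop) (a : pred factor) Fs :
  List.Forall P Fs -> List.Forall P (filter a Fs).
Proof.
elim: Fs => //= p Fs IH H; inversion H; subst; case: (a p) => //.
by constructor; auto. by auto.
Qed.

Lemma In_flatten_fst (Fs : seq factor) p x :
  List.In p Fs -> x \in p.1 -> x \in flatten (map fst Fs).
Proof.
elim: Fs => //= q Fs IH [->|hin] hx; rewrite mem_cat ?hx //.
by rewrite IH ?orbT.
Qed.

Lemma PF_eq (Fs : seq factor) G (nu1 nu2 : valuation n) :
  List.Forall (fun p => dep p /\ forall x, x \in p.1 -> nu1 x = nu2 x) Fs ->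
  PF Fs G nu1 = PF Fs G nu2.
Proof.
rewrite /PF; elim: Fs => [|p Fs IH] H; first by rewrite !big_nil.
inversion H; subst; rewrite !big_cons IH //; case: H2 => hd hx.
by rewrite (hd G nu1 nu2).
Qed.

Variables (sg : nat -> nat) (hsg : forall z, inr (sg z)) (D : seq nat).

Definition valid (W : seq nat) (tau : nat -> nat) :=
  [/\ forall x, x \in D -> tau x = sg x,
      forall x, x \in W -> inr (tau x),
      forall x, x \in W -> x \notin D -> tau x \notin map sg D &
      forall x y, x \in W -> y \in W -> x \notin D -> y \notin D ->
        tau x = tau y -> x = y].

Definition expressible (h : graph n l -> valuation n -> R) (tau : nat -> nat) :=
  exists e : expr, in_TLk k e /\
    forall G nu, tl_eval fn G nu e = h G (fun x => nu (tau x)).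

Definition fgood (p : factor) := forall tau, valid p.1 tau -> expressible p.2 tau.

Lemma valid_sub W W' tau : {subset W <= W'} -> valid W' tau -> valid W tau.
Proof.
move=> hs [h1 h2 h3 h4]; split => //.
- by move=> x /hs; apply: h2.
- by move=> x /hs; apply: h3.
- by move=> x y /hs hx /hs hy; apply: h4.
Qed.

Lemma PF_expr (Fs : seq factor) tau :
  List.Forall (fun p => expressible p.2 tau) Fs -> expressible (PF Fs) tau.
Proof.
rewrite /PF; elim: Fs => [|p Fs IH] H.
  exists (EqA 1 1); split; first exact: TL_one.
  by move=> G nu; rewrite big_nil /tl_eval /= eqxx.
inversion H; subst; case: (IH H3) => e [he He]; case: H2 => e' [he' He'].
exists (Mul e' e); split; first exact: TL_Mul.
by move=> G nu; rewrite big_cons /tl_eval /= -/(tl_eval fn G nu e) He -He'.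
Qed.


Lemma In_filter (a : pred factor) Fs p : List.In p (filter a Fs) -> a p /\ List.In p Fs.
Proof.
elim: Fs => //= q Fs IH; case: (boolP (a q)) => hq /=.
  by case=> [<-|/IH [? ?]]; auto.
by move/IH => [? ?]; auto.
Qed.

Lemma newf_good v (Fs : seq factor) : v \notin D ->
  List.Forall fgood Fs -> List.Forall dep Fs ->
  (size D + size [seq x <- Uv v Fs | x \notin D] <= k.+1)%N ->
  fgood (newf v Fs).
Proof.
move=> hvD hgood hdep hsz tau [t1 t2 t3 t4].
set U := Uv v Fs; set W' := [seq x <- U | x != v].
case E: (dv v Fs) => [|p0 rest].
  exists (Scale n%:R (EqA 1 1)); split; first by apply/TL_Scale/TL_one.
  move=> G nu; rewrite /= E /tl_eval /= eqxx RmultE mulr1.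
  under eq_bigr do rewrite /PF big_nil.
  by rewrite sumr_const card_ord.
have hvU : v \in U.
  have : List.In p0 (dv v Fs) by rewrite E; left.
  move=> hin; have [hv _] := In_filter hin.
  by rewrite /U /Uv mem_undup; apply: In_flatten_fst hin hv.
set L := map sg D ++ map tau [seq x <- W' | x \notin D].
have hL : (size L < k.+1)%N.
  rewrite size_cat !size_map.
  have hu : uniq (v :: [seq x <- W' | x \notin D]).
    rewrite /= !filter_uniq ?undup_uniq // andbT mem_filter mem_filter eqxx.
    by rewrite andbF.
  have hsub : {subset v :: [seq x <- W' | x \notin D] <= [seq x <- U | x \notin D]}.
    move=> x; rewrite inE => /orP [/eqP ->|]; first by rewrite mem_filter hvD.
    by rewrite !mem_filter => /andP [-> /andP [_ ->]].
  have := uniq_leq_size hu hsub => /= h.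
  by apply: leq_trans hsz; rewrite -addnS leq_add2l.
have [s [hs hsL]] := fresh_slot hL.
set tau' := fun x => if x == v then s else tau x.
have hW' x : x \in U -> x != v -> x \in W' by move=> hx hxv; rewrite mem_filter hxv hx.
have hneq x : x \in U -> x != v -> tau x != s.
  move=> hx hxv; apply/eqP => hts; move: hsL; rewrite /L mem_cat negb_or => /andP [h1 h2].
  case: (boolP (x \in D)) => hxD.
    by move: h1; rewrite -hts t1 // map_f.
  by move: h2; rewrite -hts map_f // mem_filter hxD hW'.
have hvalid : valid U tau'.
  split.
  - move=> x hx; rewrite /tau'; case: eqP => [hxv|_]; last exact: t1.
    by move: hvD; rewrite -hxv hx.
  - move=> x hx; rewrite /tau'; case: eqP => [//|/eqP hxv]; apply: t2; exact: hW'.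
  - move=> x hx hxD; rewrite /tau'; case: eqP => [_|/eqP hxv].
      by move: hsL; rewrite /L mem_cat negb_or => /andP [].
    by apply: t3 => //; apply: hW'.
  - move=> x y hx hy hxD hyD; rewrite /tau'.
    case: eqP => [->|/eqP hxv]; case: eqP => [->|/eqP hyv] //.
    + by move=> hst; move: (hneq y hy hyv); rewrite hst eqxx.
    + by move=> hst; move: (hneq x hx hxv); rewrite hst eqxx.
    + by apply: t4 => //; apply: hW'.
have hexp : List.Forall (fun p => expressible p.2 tau') (dv v Fs).
  apply/List.Forall_forall => p hin; have [hv hinF] := In_filter hin.
  have := List.Forall_forall fgood Fs; case=> h _; apply: (h hgood p hinF).
  apply: valid_sub hvalid => x hx; rewrite /U /Uv mem_undup.
  exact: In_flatten_fst hin hx.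
have [e [he He]] := PF_expr hexp.
exists (Sum s e); split; first exact: TL_Sum.
move=> G nu; rewrite /tl_eval /=; apply: eq_bigr => u _.
rewrite -/(tl_eval fn G _ e) He; apply: PF_eq.
apply/List.Forall_forall => p hin; have [hv hinF] := In_filter hin.
split; first by move: hdep => /List.Forall_forall; apply.
move=> x hx; have hxU : x \in U by rewrite /U /Uv mem_undup; exact: In_flatten_fst hin hx.
rewrite /tau' /upd; case: (eqVneq x v) => [_|hxv]; first by rewrite eqxx.
by rewrite (negbTE (hneq x hxU hxv)).
Qed.


Lemma flatten_fst_In (Fs : seq factor) x :
  x \in flatten (map fst Fs) -> exists p, List.In p Fs /\ x \in p.1.
Proof.
elim: Fs => //= q Fs IH; rewrite mem_cat => /orP [hx|/IH [p [? ?]]].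
  by exists q; split; [left|].
by exists p; split; [right|].
Qed.

Lemma newf_dep v (Fs : seq factor) : List.Forall dep Fs -> dep (newf v Fs).
Proof.
move=> hdep G nu nu' hag /=; apply: eq_bigr => u _; apply: PF_eq.
apply/List.Forall_forall => p hin; have [hv hinF] := In_filter hin.
split; first by move: hdep => /List.Forall_forall; apply.
move=> x hx; rewrite /upd; case: eqP => // /eqP hxv; apply: hag.
by rewrite mem_filter hxv /Uv mem_undup; apply: In_flatten_fst hin hx.
Qed.

Definition inv (vs : seq nat) (p : factor) :=
  [/\ dep p, fgood p & forall x, x \in p.1 -> x \in D \/ x \in vs].

Lemma elim_main vs : forall (Fs : seq factor) ys,
  uniq vs -> uniq ys -> ys =i vs -> (forall v, v \in vs -> v \notin D) ->
  List.Forall (inv vs) Fs ->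
  (forall U, U \in elim_U (map fst Fs) vs ->
     (size D + size [seq x <- U | x \notin D] <= k.+1)%N) ->
  expressible (fun G nu => Nest ys (PF Fs G) nu) sg.
Proof.
elim: vs => [|v vs IH] Fs ys huv huy hys hvD hinv hw.
  case: ys huy hys => [_ _|y ys _ hys]; last first.
    by move: (hys y); rewrite inE eqxx.
  apply: PF_expr; apply/List.Forall_forall => p hin.
  move: hinv => /List.Forall_forall /(_ p hin) [_ hg hx].
  apply: hg; split; first by [].
  - by move=> x _; exact: (hsg x).
  - by move=> x /hx [->|].
  - by move=> x y /hx [->|].
have hvys : v \in ys by rewrite hys inE eqxx.
move: huv => /= /andP [hvvs huv].
have hdep : List.Forall dep Fs.
  by apply/List.Forall_forall => p hin; move: hinv => /List.Forall_forall /(_ p hin) [].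
have [e [he He]] : expressible (fun G nu => Nest (rem v ys) (PF (step v Fs) G) nu) sg.
  apply: IH => //.
  - exact: rem_uniq.
  - move=> x; rewrite mem_rem_uniq // inE /= hys inE.
    by case: (eqVneq x v) => [->|] //=; rewrite (negbTE hvvs).
  - by move=> x hx; apply: hvD; rewrite inE hx orbT.
  - apply/List.Forall_forall => p hin0; case: (List.in_app_or _ _ _ hin0) => [hin|].
      have [hv hinF] := In_filter hin.
      move: hinv => /List.Forall_forall /(_ p hinF) [h1 h2 h3]; split => //.
      move=> x hx; case: (h3 x hx) => [->|]; first by left.
      rewrite inE => /orP [/eqP hxv|]; last by right.
      by move: hv; rewrite -hxv hx.
    case=> // <-; split.
    + exact: newf_dep.
    + apply: newf_good.
      * by apply: hvD; rewrite inE eqxx.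
      * by apply/List.Forall_forall => p0 hin; move: hinv => /List.Forall_forall /(_ p0 hin) [].
      * exact: hdep.
      * apply: hw; rewrite /= inE; apply/orP; left.
        by rewrite /Uv /dv filter_map.
    + move=> x; rewrite /= mem_filter /Uv mem_undup => /andP [hxv hxf].
      have [q [hin hxp]] := flatten_fst_In hxf.
      have [_ hinF] := In_filter hin.
      move: hinv => /List.Forall_forall /(_ q hinF) [_ _ h3].
      case: (h3 x hxp) => [->|]; first by left.
      by rewrite inE (negbTE hxv) /=; right.
  - move=> U hU; apply: hw; rewrite /= inE; apply/orP; right.
    by rewrite -step_fst.
exists e; split => // G nu; rewrite He (Nest_elim _ _ huy hvys).
by apply: Nest_ext => nu'; rewrite step_sem.
Qed.


Variable rhoG : graph n l -> rel_interp n.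
Hypothesis hrho : forall r (s : seq nat), all (fun x => inr x) s ->
  exists e : expr, in_TLk k e /\
    forall G nu, tl_eval fn G nu e = rhoG G r (map nu s).

Definition atom_factor (a : atom l) : factor :=
  (atom_vars a, fun G nu => atom_eval G (rhoG G) nu a).

Lemma cq_sem_Nest G ys (atoms : seq (atom l)) nu :
  cq_sem G (rhoG G) ys atoms nu = Nest ys (PF (map atom_factor atoms) G) nu.
Proof.
elim: ys nu => /= [|y ys IH] nu; last by apply: eq_bigr => v _; apply: IH.
by rewrite /PF big_map.
Qed.

Lemma atom_dep a : dep (atom_factor a).
Proof.
case: a => [x y|x y|x y|s x|r zs] G nu nu' H /=;
  rewrite ?H ?mem_undup ?inE ?eqxx ?orbT //.
by congr (rhoG G r _); apply/eq_in_map => z hz; apply: H; rewrite mem_undup.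
Qed.

Lemma atom_good a : fgood (atom_factor a).
Proof.
move=> tau [_ t2 _ _]; rewrite /= in t2.
case: a t2 => [x y|x y|x y|s x|r zs] t2;
  try (have hx : inr (tau x) by apply: t2; rewrite ?mem_undup /= !inE eqxx ?orbT);
  try (have hy : inr (tau y) by apply: t2; rewrite ?mem_undup /= !inE (eqxx y) ?orbT).
- exists (EqA (tau x) (tau y)); split => //; split => //=.
  by rewrite hx hy.
- exists (NeqA (tau x) (tau y)); split => //; split => //=.
  by rewrite hx hy.
- exists (EdgeA (tau x) (tau y)); split => //; split => //=.
  by rewrite hx hy.
- exists (PA s (tau x)); split => //; split => //=.
  by rewrite hx.
- have hall : all (fun x => inr x) [seq tau z | z <- zs].
    by apply/allP => z /mapP [z' hz' ->]; apply: t2; rewrite mem_undup.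
  have [e [he He]] := hrho r hall.
  by exists e; split => // G nu; rewrite He -map_comp.
Qed.

Lemma all_In (T : Type) (P : pred T) s a : all P s -> List.In a s -> P a.
Proof. by elim: s => //= b s IH /andP [hb hs] [<-|/IH]; auto. Qed.

Lemma foldr_maxn_ge (s : seq nat) x : x \in s -> (x <= foldr maxn 0 s)%N.
Proof.
elim: s => //= y s IH; rewrite inE => /orP [/eqP ->|/IH h].
  exact: leq_maxl.
by apply: leq_trans h (leq_maxr _ _).
Qed.

Lemma cq_expr (q : cq l) ord : D = cq_free q -> cq_wf q -> elim_seq q ord ->
  (induced_width q ord <= Posz k)%R ->
  expressible (fun G nu => cq_eval G (rhoG G) nu q) sg.
Proof.
move=> hD /and4P [hfu hbu hbf hat] /andP [/andP [hou hperm] htake] hiw.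
set f := size (cq_free q).
set vs := rev (drop f ord).
have hpd : perm_eq (drop f ord) (cq_bound q).
  have h1 : perm_eq (take f ord ++ drop f ord) (cq_free q ++ cq_bound q).
    by rewrite cat_take_drop.
  have h2 : perm_eq (take f ord ++ drop f ord) (cq_free q ++ drop f ord).
    by rewrite perm_cat2r.
  by rewrite -(perm_cat2l (cq_free q)); apply: perm_trans h1; rewrite perm_sym.
have hvs : forall x, (x \in vs) = (x \in cq_bound q).
  by move=> x; rewrite mem_rev (perm_mem hpd).
have [e [he He]] :
    expressible (fun G nu => Nest (cq_bound q) (PF (map atom_factor (cq_atoms q)) G) nu) sg.
  apply: (@elim_main vs).
  - by rewrite rev_uniq; apply: drop_uniq.
  - exact: hbu.
  - by move=> x; rewrite hvs.
  - by move=> v; rewrite hvs hD => hv; move/allP: hbf => /(_ v hv).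
  - apply/List.Forall_forall => p /List.in_map_iff [a [<- ha]]; split.
    + exact: atom_dep.
    + exact: atom_good.
    + move=> x hx; have := all_In hat ha; move=> /allP /(_ x hx).
      by rewrite mem_cat hD hvs => /orP [] ?; [left|right].
  - move=> U hU.
    have E : map fst (map atom_factor (cq_atoms q)) = cq_hyperedges q by rewrite -map_comp.
    rewrite E in hU.
    have hm := foldr_maxn_ge (map_f (fun U => size [seq x <- U | x \notin take f ord]) hU).
    have -> : [seq x <- U | x \notin D] = [seq x <- U | x \notin take f ord].
      by apply: eq_filter => x; rewrite (perm_mem htake) hD.
    move: hiw hm; rewrite /induced_width -/f hD => h1 h2 /=; rewrite /vs /f in h1 h2 *; set M := foldr _ _ _ in h1 h2; set A := size _ in h2 *; have h3 : (Posz (size (cq_free q) + M) <= Posz k + 1)%R by rewrite -lerBlDr. rewrite -PoszD lez_nat addn1 in h3. lia.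
by exists e; split => // G nu; rewrite He /cq_eval cq_sem_Nest.
Qed.

End Part2.

Section Part3.
Variables (n l : nat) (F : Type) (ar : F -> nat)
          (fn : forall f : F, ('I_(ar f) -> R) -> R) (k : nat) (hn : (0 < n)%N).
Local Notation expr := (expr l ar).
Local Notation inr x := (1 <= x <= k.+1)%N.

Definition Good (e : expr) := forall sg : nat -> nat, (forall z, inr (sg z)) ->
  exists e', in_TLk k e' /\
    forall (G : graph n l) nu, tl_eval fn G nu e' = tl_eval fn G (fun x => nu (sg x)) e.

Fixpoint apps (e : expr) : seq expr :=
  match e with
  | App _ _ => [:: e]
  | Mul a b | Add a b => apps a ++ apps b
  | Scale _ a | Sum _ a => apps a
  | _ => [::]
  end.

Definition d0 : expr := EqA 0 0.

Lemma nofun_cnt (e : expr) c : (nofun c e).2 = (c + size (apps e))%N.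
Proof.
elim: e c => //=; try by move=> *; rewrite addn0.
- move=> a IHa b IHb c; case E1: (nofun c a) => [a' c1].
  case E2: (nofun c1 b) => [b' c2] /=.
  have h1 := IHa c; have h2 := IHb c1; rewrite E1 /= in h1; rewrite E2 /= in h2.
  by rewrite h2 h1 size_cat addnA.
- move=> a IHa b IHb c; case E1: (nofun c a) => [a' c1].
  case E2: (nofun c1 b) => [b' c2] /=.
  have h1 := IHa c; have h2 := IHb c1; rewrite E1 /= in h1; rewrite E2 /= in h2.
  by rewrite h2 h1 size_cat addnA.
- by move=> r a IHa c; case E1: (nofun c a) => [a' c1]; have := IHa c; rewrite E1.
- by move=> *; rewrite addn1.
- by move=> x a IHa c; case E1: (nofun c a) => [a' c1]; have := IHa c; rewrite E1.
Qed.

Lemma nofun_eval (e : expr) : forall c (G : graph n l) rho, is_TL e ->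
  (forall i, (i < size (apps e))%N -> forall nu,
     rho (c + i)%N (map nu (fv (nth d0 (apps e) i))) =
     tl_eval fn G nu (nth d0 (apps e) i)) ->
  forall nu, eval fn G rho nu (nofun c e).1 = tl_eval fn G nu e.
Proof.
elim: e => //=.
- move=> a IHa b IHb c G rho [ha hb] H nu.
  case E1: (nofun c a) => [a' c1]; case E2: (nofun c1 b) => [b' c2] /=.
  have hc1 : c1 = (c + size (apps a))%N by have := nofun_cnt a c; rewrite E1.
  have := IHa c G rho ha; rewrite E1 /= => ->; last first.
    move=> i hi nu'; have := H i _ nu'; rewrite nth_cat hi; apply.
    by rewrite size_cat ltn_addr.
  have := IHb c1 G rho hb; rewrite E2 /= => ->; last first.
    move=> i hi nu'; have := H (size (apps a) + i)%N _ nu'.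
    have e1 : (size (apps a) + i < size (apps a))%N = false.
      by rewrite -{2}(addn0 (size (apps a))) ltn_add2l.
    rewrite nth_cat e1 addKn addnA -hc1; apply.
    by rewrite size_cat ltn_add2l.
  by [].
- move=> a IHa b IHb c G rho [ha hb] H nu.
  case E1: (nofun c a) => [a' c1]; case E2: (nofun c1 b) => [b' c2] /=.
  have hc1 : c1 = (c + size (apps a))%N by have := nofun_cnt a c; rewrite E1.
  have := IHa c G rho ha; rewrite E1 /= => ->; last first.
    move=> i hi nu'; have := H i _ nu'; rewrite nth_cat hi; apply.
    by rewrite size_cat ltn_addr.
  have := IHb c1 G rho hb; rewrite E2 /= => ->; last first.
    move=> i hi nu'; have := H (size (apps a) + i)%N _ nu'.
    have e1 : (size (apps a) + i < size (apps a))%N = false.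
      by rewrite -{2}(addn0 (size (apps a))) ltn_add2l.
    rewrite nth_cat e1 addKn addnA -hc1; apply.
    by rewrite size_cat ltn_add2l.
  by [].
- move=> r a IHa c G rho ha H nu; case E1: (nofun c a) => [a' c1] /=.
  by have := IHa c G rho ha; rewrite E1 /= => ->.
- move=> f args _ c G rho _ H nu; have := H 0%N _ nu; rewrite addn0 /=; apply.
  by [].
- move=> x a IHa c G rho ha H nu; case E1: (nofun c a) => [a' c1] /=.
  apply: eq_bigr => v _.
  by have := IHa c G rho ha; rewrite E1 /= => ->.
Qed.


Definition v0 : 'I_n := Ordinal hn.

Definition rhoP (e : expr) (G : graph n l) : rel_interp n := fun r t =>
  if (r < size (apps e))%N then
    let a := nth d0 (apps e) r in
    if size t == size (fv a) then
      tl_eval fn G (fun z => nth v0 t (index z (fv a))) a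
    else 0
  else 0.

Lemma rhoP_spec (e : expr) G i nu : (i < size (apps e))%N ->
  rhoP e G i (map nu (fv (nth d0 (apps e) i))) = tl_eval fn G nu (nth d0 (apps e) i).
Proof.
move=> hi; rewrite /rhoP hi size_map eqxx; apply: eval_fv => z hz.
by rewrite (nth_map 0%N) ?index_mem // nth_index.
Qed.

Lemma zero_expr : exists e : expr, in_TLk k e /\
  forall (G : graph n l) nu, tl_eval fn G nu e = 0.
Proof.
exists (Scale 0 (EqA 1 1)); split; first by apply/TL_Scale/TL_one.
by move=> G nu; rewrite /tl_eval /= RmultE mul0r.
Qed.

Lemma rhoP_good (e : expr) :
  (forall i, (i < size (apps e))%N -> Good (nth d0 (apps e) i)) ->
  forall r (s : seq nat), all (fun x => inr x) s ->
  exists e' : expr, in_TLk k e' /\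
    forall G nu, tl_eval fn G nu e' = rhoP e G r (map nu s).
Proof.
move=> hG r s hs; rewrite /rhoP.
case: (ltnP r (size (apps e))) => hr; last first.
  by have [e' [? He]] := zero_expr; exists e'; split => // G nu; rewrite He.
set a := nth d0 (apps e) r.
case: (eqVneq (size s) (size (fv a))) => hsz; last first.
  have [e' [? He]] := zero_expr; exists e'; split => // G nu.
  by rewrite He size_map (negbTE hsz).
pose sg z := nth 1%N s (index z (fv a)).
have hsg : forall z, inr (sg z).
  move=> z; rewrite /sg; case: (ltnP (index z (fv a)) (size s)) => hz.
    by move/allP: hs; apply; rewrite mem_nth.
  by rewrite nth_default.
have [e' [he' He']] := hG r hr sg hsg.
exists e'; split => // G nu; rewrite He' size_map hsz eqxx.
apply: eval_fv => z hz.
by rewrite /sg (nth_map 1%N) // hsz index_mem.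
Qed.


Lemma tw_good (e : expr) : is_TL e -> lincomb_tw_le n fn k (nofun 0 e).1 ->
  (forall i, (i < size (apps e))%N -> Good (nth d0 (apps e) i)) -> Good e.
Proof.
move=> hTL [cs [hcs heq]] hA sg hsg.
have hrho := rhoP_good hA.
suff [e' [he' He']] : exists e' : expr, in_TLk k e' /\ forall G nu,
    tl_eval fn G nu e' =
    \sum_(p <- cs) p.1 * cq_eval G (rhoP e G) (fun x => nu (sg x)) p.2.
  exists e'; split => // G nu; rewrite He' -heq nofun_eval //.
  by move=> i hi nu'; rewrite add0n rhoP_spec.
elim: cs hcs {heq} => [|p cs IH] hcs.
  have [e' [? He]] := zero_expr; exists e'; split => // G nu.
  by rewrite He big_nil.
inversion hcs as [|p' cs' [hwf [ord hord hw]] hcs']; subst.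
have [ep [hep Hep]] := cq_expr hsg hrho (erefl (cq_free p.2)) hwf hord hw.
have [er [her Her]] := IH hcs'.
exists (Add (Scale p.1 ep) er); split; first by apply/TL_Add => //; apply/TL_Scale.
move=> G nu; rewrite big_cons /tl_eval /= -/(tl_eval fn G nu ep) -/(tl_eval fn G nu er).
by rewrite Hep Her RplusE RmultE.
Qed.

Fixpoint aok (e : expr) : Prop :=
  match e with
  | App f args => forall i, tw_le n fn k (args i)
  | Mul a b | Add a b => aok a /\ aok b
  | Scale _ a | Sum _ a => aok a
  | _ => True
  end.

Lemma tw_le_unfold (e : expr) : tw_le n fn k e ->
  lincomb_tw_le n fn k (nofun 0 e).1 /\ aok e.
Proof.
move=> H.
by case: e H => [x y|x y|x y|s x|a b|a b|c a|f args|x a|r zs] H0; exact: H0.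
Qed.


Lemma maxapps (e : expr) : is_TL e -> aok e ->
  forall i, (i < size (apps e))%N -> Good (nth d0 (apps e) i).
Proof.
elim: e => //=.
- move=> a IHa b IHb [ta tb] [oa ob] i; rewrite size_cat nth_cat.
  case: (ltnP i (size (apps a))) => hi hlt; first exact: IHa.
  by apply: IHb => //; rewrite -(ltn_add2l (size (apps a))) subnKC.
- move=> a IHa b IHb [ta tb] [oa ob] i; rewrite size_cat nth_cat.
  case: (ltnP i (size (apps a))) => hi hlt; first exact: IHa.
  by apply: IHb => //; rewrite -(ltn_add2l (size (apps a))) subnKC.
- move=> f args IH targs oargs [|i] // _ sg hsg.
  have hg : forall j, Good (args j).
    move=> j; have [hl ho] := tw_le_unfold (oargs j).
    by apply: tw_good => //; apply: IH.
  have [es Hes] := fin_all_exists (fun j => hg j sg hsg).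
  exists (App f es); split.
    by apply: TL_App => j; case: (Hes j).
  move=> G nu; rewrite /tl_eval /=; congr (fn _).
  apply: functional_extensionality => j; case: (Hes j) => _ H; exact: H.
Qed.

End Part3.

Theorem proposition2
  (n l : nat) (hn : (1 <= n)%N) (hl : (1 <= l)%N)
  (F : Type) (ar : F -> nat) (fn : forall f : F, ('I_(ar f) -> R) -> R)
  (har : forall f : F, (1 <= ar f)%N)
  (k : nat) (phi : expr l ar) :
  is_TL phi ->
  tw_le n fn k phi ->
  all (fun x => (1 <= x <= k.+1)%N) (fv phi) ->
  exists phi' : expr l ar,
    in_TLk k phi' /\
    forall (G : graph n l) (nu : valuation n),
      tl_eval fn G nu phi' = tl_eval fn G nu phi.
Proof.
move=> hTL htw hfv.
have [hlin hok] := tw_le_unfold htw.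
have hG : Good n fn k phi := tw_good hn hTL hlin (fun i => @maxapps _ _ _ _ fn k hn _ hTL hok i).
pose sg z := if (1 <= z <= k.+1)%N then z else 1%N.
have hsg : forall z, (1 <= sg z <= k.+1)%N.
  by move=> z; rewrite /sg; case: ifP.
have [e [he He]] := hG sg hsg.
exists e; split => // G nu; rewrite He /tl_eval; apply: eval_fv => z hz.
by rewrite /sg (allP hfv z hz).
Qed.
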